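(* Let $H$ be a numerical semigroup minimally generated by $a_1<a_2<\dots<a_n$ with $n>1$. If $H$ is quadratic, then (a) there exist $k,\ell\geq 2$ such that $a_1$ divides $a_k+a_\ell$; (b) $2a_i\in\langle a_1,\dots,a_{i-1},a_{i+1},\dots,a_n\rangle$ for all $2\leq i\leq n$.
   Context: A numerical semigroup is a submonoid of $\mathbb{N}$ with finite complement. $K$ is a field, $S=K[x_1,\dots,x_n]$ and $I_H=\ker(S\to K[t],\ x_i\mapsto t^{a_i})$. For $0\neq f\in S$, $f^*$ is its homogeneous component of least degree, and $I_H^*=(f^*:0\ne f\in I_H)$. $H$ is quadratic if $I_H^*$ is generated by homogeneous polynomials of degree 2. $\langle b_1,\dots,b_m\rangle$ denotes the semigroup generated by $b_1,\dots,b_m$. *)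

(* Defs.v *)
From HB Require Import structures.
From mathcomp Require Import all_boot all_order all_algebra.
From mathcomp Require Import mpoly.
Set Implicit Arguments. Unset Strict Implicit. Unset Printing Implicit Defensive.
Import Order.TTheory GRing.Theory.
Local Open Scope ring_scope.

(* Generators a_1 < ... < a_n are represented as a : nat -> nat, with
   a_{i+1} := a i for i < n (0-based indices); a values at i >= n are irrelevant.
   The variable x_{i+1} of S is 'X_i for i : 'I_n. *)

Definition in_sg (n : nat) (a : nat -> nat) (P : pred nat) (x : nat) : Prop :=
  exists c : nat -> nat, x = (\sum_(j < n | P j) c j * a j)%N.

Definition numerical_semigroup (n : nat) (a : nat -> nat) : Prop :=
  exists N : nat, forall x : nat, (N <= x)%N -> in_sg n a predT x.

Definition min_gen_increasing (n : nat) (a : nat -> nat) : Prop :=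
  (forall i j : nat, (i < j < n)%N -> (a i < a j)%N) /\
  (forall i : nat, (i < n)%N -> ~ in_sg n a (predC1 i) (a i)).

Definition in_IH (K : fieldType) (n : nat) (a : nat -> nat) (f : {mpoly K[n]}) : Prop :=
  mmap (@polyC K) (fun i : 'I_n => 'X^(a i)) f = 0.

Definition low_deg (K : fieldType) (n : nat) (f : {mpoly K[n]}) : nat :=
  foldr minn (msize f) [seq mdeg m | m <- msupp f].

Definition initial_form (K : fieldType) (n : nat) (f : {mpoly K[n]}) : {mpoly K[n]} :=
  \sum_(m <- msupp f | mdeg m == low_deg f) f@_m *: 'X_[m].

Definition in_ideal_gen (K : fieldType) (n : nat) (G : {mpoly K[n]} -> Prop)
    (p : {mpoly K[n]}) : Prop :=
  exists s : seq ({mpoly K[n]} * {mpoly K[n]}),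
    (forall x, x \in s -> G x.2) /\ p = \sum_(x <- s) x.1 * x.2.

Definition in_IHstar (K : fieldType) (n : nat) (a : nat -> nat) (p : {mpoly K[n]}) : Prop :=
  in_ideal_gen (fun g => exists f, f <> 0 /\ in_IH a f /\ g = initial_form f) p.

Definition quadratic (K : fieldType) (n : nat) (a : nat -> nat) : Prop :=
  exists G : {mpoly K[n]} -> Prop,
    (forall g, G g -> g \is 2.-homog) /\
    (forall p : {mpoly K[n]}, in_ideal_gen G p <-> in_IHstar a p).

(* Main.v *)
Require Import Defs.
From HB Require Import structures.
From mathcomp Require Import all_boot all_order all_algebra.
From mathcomp Require Import mpoly zify.
From Stdlib Require Import Classical.
Set Implicit Arguments. Unset Strict Implicit. Unset Printing Implicit Defensive.
Import Order.TTheory GRing.Theory.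
Local Open Scope ring_scope.
Section Core.
Variables (K : fieldType) (n : nat) (a : nat -> nat).
Implicit Types (p q f g : {mpoly K[n]}) (m j k u w : 'X_{1..n}).

Definition Hdeg m : nat := (\sum_(i < n) m i * a i)%N.

Definition Lam (C : pred 'X_{1..n}) k p : K :=
  \sum_(j <- msupp p | C (k + j)%MM) p@_j.

Lemma Lam_sup C k p s : uniq s -> {subset msupp p <= s} ->
  Lam C k p = \sum_(j <- s | C (k + j)%MM) p@_j.
Proof.
move=> us sub; rewrite (bigID (fun j => j \in msupp p)) /=.
rewrite [X in _ = _ + X]big1 ?addr0; last first.
  by move=> j /andP[_ /memN_msupp_eq0].
rewrite (eq_bigl (fun j => (j \in msupp p) && C (k + j)%MM)); last first.
  by move=> j; rewrite andbC.
rewrite -big_filter_cond /Lam; apply: perm_big.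
apply: uniq_perm; rewrite ?msupp_uniq ?filter_uniq //.
by move=> j; rewrite mem_filter; case: (boolP (j \in msupp p)) => // /sub ->.
Qed.

Lemma Lam0 C k : Lam C k 0 = 0.
Proof. by rewrite /Lam msupp0 big_nil. Qed.

Lemma LamD C k p q : Lam C k (p + q) = Lam C k p + Lam C k q.
Proof.
set s := undup (msupp p ++ msupp q ++ msupp (p + q)).
have us : uniq s by exact: undup_uniq.
rewrite !(@Lam_sup _ _ _ s us) -?big_split /=; last 3 first.
- by move=> j hj; rewrite mem_undup !mem_cat hj ?orbT.
- by move=> j hj; rewrite mem_undup !mem_cat hj ?orbT.
- by move=> j hj; rewrite mem_undup !mem_cat hj ?orbT.
by apply: eq_bigr => j _; rewrite mcoeffD.
Qed.

Lemma LamZ C k c p : Lam C k (c *: p) = c * Lam C k p.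
Proof.
rewrite (@Lam_sup _ _ _ (msupp p) (msupp_uniq p)); last exact: msuppZ_le.
by rewrite /Lam mulr_sumr; apply: eq_bigr => j _; rewrite mcoeffZ.
Qed.

Lemma Lam_sum C k (I : Type) (r : seq I) (F : I -> {mpoly K[n]}) :
  Lam C k (\sum_(i <- r) F i) = \sum_(i <- r) Lam C k (F i).
Proof.
elim: r => [|x r IH]; first by rewrite !big_nil Lam0.
by rewrite !big_cons LamD IH.
Qed.

Lemma LamMX C k j1 g : Lam C k ('X_[j1] * g) = Lam C (k + j1)%MM g.
Proof.
rewrite -commr_mpolyX /Lam (perm_big _ (msuppMX g j1)) big_map.
apply: eq_big => [j|j _]; first by rewrite addmA.
by rewrite mcoeffMX.
Qed.

Lemma LamM (P : pred 'X_{1..n}) C q g :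
  (forall k j, P k -> P (k + j)%MM) ->
  (forall k, P k -> Lam C k g = 0) ->
  forall k, P k -> Lam C k (q * g) = 0.
Proof.
move=> Pup Hg k Pk; rewrite [q]mpolyE mulr_suml Lam_sum big1 // => j _.
by rewrite -scalerAl LamZ LamMX Hg ?mulr0 // Pup.
Qed.

Lemma Lam_ideal (G : {mpoly K[n]} -> Prop) (P : pred 'X_{1..n}) C p :
  (forall k j, P k -> P (k + j)%MM) ->
  (forall g, G g -> forall k, P k -> Lam C k g = 0) ->
  in_ideal_gen G p -> forall k, P k -> Lam C k p = 0.
Proof.
move=> Pup HG [s [Hs ->]] k Pk; rewrite Lam_sum big1_seq // => x /andP[_ xs].
exact: (@LamM P C x.1 x.2 Pup (HG _ (Hs _ xs)) k Pk).
Qed.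
Lemma mmap1_H m :
  mmap1 (fun i : 'I_n => 'X^(a i) : {poly K}) m = 'X^(Hdeg m).
Proof.
rewrite /mmap1 /Hdeg (big_morph (fun e : nat => 'X^e : {poly K}) (exprD 'X) (expr0 'X)).
apply: congr_big => // i _; rewrite -exprM mulnC. by [].
Qed.

Lemma IH_sum f h : in_IH a f -> \sum_(j <- msupp f | Hdeg j == h) f@_j = 0.
Proof.
move=> H; have := congr1 (fun P : {poly K} => P`_h) H.
rewrite /= coef0 /mmap coef_sum => E; apply: (etrans _ E).
rewrite big_mkcond /=; apply: eq_bigr => j _.
rewrite mmap1_H coefCM coefXn eq_sym.
by case: eqP => _; rewrite ?mulr1 ?mulr0.
Qed.

Lemma foldr_minn_le x0 (s : seq nat) y : y \in s -> (foldr minn x0 s <= y)%N.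
Proof.
elim: s => //= z s IH; rewrite inE => /orP[/eqP->|/IH]; first exact: geq_minl.
by move=> H; exact: leq_trans (geq_minr _ _) H.
Qed.

Lemma foldr_minn_ge x0 (s : seq nat) x :
  (x <= x0)%N -> (forall y, y \in s -> x <= y)%N -> (x <= foldr minn x0 s)%N.
Proof.
move=> h0; elim: s => //= z s IH H; rewrite leq_min H ?inE ?eqxx //=.
by apply: IH => y ys; apply: H; rewrite inE ys orbT.
Qed.

Lemma low_deg_le f m : m \in msupp f -> (low_deg f <= mdeg m)%N.
Proof. by move=> hm; apply: foldr_minn_le; apply: map_f. Qed.

Lemma low_deg_ge f x : (x <= msize f)%N ->
  (forall m, m \in msupp f -> x <= mdeg m)%N -> (x <= low_deg f)%N.
Proof.
move=> h1 h2; apply: foldr_minn_ge => // y /mapP[m hm ->]; exact: h2.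
Qed.

Lemma init_coef f m :
  (initial_form f)@_m = if mdeg m == low_deg f then f@_m else 0.
Proof.
rewrite /initial_form raddf_sum /= big_mkcond /=.
rewrite (eq_bigr (fun j => if j == m then (if mdeg m == low_deg f then f@_m else 0) else 0)); last first.
  move=> j _; rewrite mcoeffZ mcoeffX.
  case: (eqVneq j m) => [->|ne]; first by rewrite mulr1.
  by rewrite mulr0; case: ifP.
case: (boolP (m \in msupp f)) => hm.
  rewrite (bigD1_seq m hm (msupp_uniq f)) /= eqxx big1 ?addr0 //.
  by move=> j /negbTE ->.
rewrite big1_seq; last first.
  move=> j /andP[_ jin]; case: (eqVneq j m) => [ej|//].
  by move: hm; rewrite -ej jin.
by rewrite (memN_msupp_eq0 hm); case: ifP.
Qed.
Definition Closed (P C : pred 'X_{1..n}) :=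
  forall k j j', P k -> C (k + j)%MM -> Hdeg j' = Hdeg j ->
  (mdeg j <= mdeg j')%N -> mdeg j' = mdeg j /\ C (k + j')%MM.

Lemma sum_by_H (s : seq 'X_{1..n}) (hs : seq nat) (F : 'X_{1..n} -> K) :
  uniq hs ->
  \sum_(j <- s | Hdeg j \in hs) F j =
  \sum_(h <- hs) \sum_(j <- s | Hdeg j == h) F j.
Proof.
elim: hs => [|h hs IH] /=; first by rewrite big_nil big_pred0.
case/andP=> hnin uhs; rewrite big_cons -IH //.
rewrite (bigID (fun j => Hdeg j == h)) /=; congr (_ + _).
  by apply: eq_bigl => j; rewrite inE; case: (Hdeg j == h); rewrite ?andbF.
apply: eq_bigl => j; rewrite inE; case: (eqVneq (Hdeg j) h) => [->|_] /=.
  by rewrite (negbTE hnin).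
by rewrite andbT.
Qed.

Lemma Lam_init P C f k : Closed P C -> in_IH a f -> P k ->
  Lam C k (initial_form f) = 0.
Proof.
move=> Cl Hf Pk.
rewrite (@Lam_sup _ _ _ (msupp f) (msupp_uniq f)); last first.
  move=> j; rewrite mcoeff_msupp init_coef mcoeff_msupp.
  by case: ifP => //; rewrite eqxx.
rewrite (eq_bigr (fun j => if mdeg j == low_deg f then f@_j else 0)); last first.
  by move=> j _; rewrite init_coef.
rewrite -big_mkcondr /=.
set Q := fun j => C (k + j)%MM && (mdeg j == low_deg f).
set hs := undup [seq Hdeg j | j <- msupp f & Q j].
have eQ : forall j, j \in msupp f -> Q j = (Hdeg j \in hs).
  move=> j jin; rewrite mem_undup; apply/idP/idP => [qj|].
    by apply: map_f; rewrite mem_filter qj.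
  case/mapP=> j0; rewrite mem_filter => /andP[/andP[C0 /eqP d0] j0in] eH.
  have hle : (mdeg j0 <= mdeg j)%N by rewrite d0 low_deg_le.
  have [dj Cj] := Cl k j0 j Pk C0 eH hle.
  by rewrite /Q Cj dj d0 eqxx.
rewrite big_seq_cond (eq_bigl (fun j => (j \in msupp f) && (Hdeg j \in hs))); last first.
  by move=> j; case: (boolP (j \in msupp f)) => //= jin; rewrite -eQ.
rewrite -big_seq_cond sum_by_H ?undup_uniq // big1 // => h _.
exact: IH_sum.
Qed.

Lemma Lam_IHstar P C p : Closed P C -> (forall k j, P k -> P (k + j)%MM) ->
  in_IHstar a p -> forall k, P k -> Lam C k p = 0.
Proof.
move=> Cl Pup Hp; apply: (Lam_ideal Pup _ Hp).
by move=> g [f [_ [Hf ->]]] k Pk; apply: Lam_init Cl Hf Pk.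
Qed.

Lemma core (C : pred _) (D : nat) u : quadratic K n a ->
  (forall v, C v -> mdeg v = D) ->
  Closed (fun k => D <= mdeg k + 2)%N C -> C u ->
  in_IHstar a ('X_[u] : {mpoly K[n]}) -> False.
Proof.
move=> [G [hG eqG]] CD Cl Cu Hu.
have Pup : forall k j, (D <= mdeg k + 2)%N -> (D <= mdeg (k + j)%MM + 2)%N.
  by move=> k j; rewrite mdegD; lia.
have HG : forall g, G g -> forall k, true -> Lam C k g = 0.
  move=> g Gg k _.
  have Ig : in_IHstar a g.
    apply/eqG; exists [:: (1, g)]; split; last by rewrite big_seq1 mul1r.
    by move=> x; rewrite inE => /eqP ->.
  case: (leqP D (mdeg k + 2)) => hk; first exact: (Lam_IHstar Cl Pup Ig).
  rewrite /Lam big1_seq // => j /andP[Cj jin].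
  have := dhomog_mf (hG g Gg) jin; have := CD _ Cj; rewrite mdegD /= => e1 e2.
  lia.
have := @Lam_ideal G (fun _ => true) C _ (fun _ _ _ => erefl) HG ((eqG _).2 Hu) 0%MM erefl.
rewrite /Lam msuppX big_cons big_nil add0m Cu mcoeffX eqxx addr0 => /eqP.
by rewrite oner_eq0.
Qed.

Lemma Hdeg_mmap m : mmap (@polyC K) (fun i : 'I_n => 'X^(a i)) 'X_[m] = 'X^(Hdeg m).
Proof. by rewrite mmapX mmap1_H. Qed.

Lemma binom_IHstar u w : Hdeg u = Hdeg w -> (mdeg u < mdeg w)%N ->
  in_IHstar a ('X_[u] : {mpoly K[n]}).
Proof.
move=> eH ltd.
have nuw : u != w by apply/eqP => e; move: ltd; rewrite e ltnn.
set f : {mpoly K[n]} := 'X_[u] - 'X_[w].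
have fc : forall m, f@_m = (u == m)%:R - (w == m)%:R.
  by move=> m; rewrite mcoeffB !mcoeffX.
have fu : f@_u = 1 by rewrite fc eqxx eq_sym (negbTE nuw) subr0.
have uin : u \in msupp f by rewrite mcoeff_msupp fu oner_eq0.
have supp : forall m, m \in msupp f -> m = u \/ m = w.
  move=> m; rewrite mcoeff_msupp fc.
  case: (eqVneq u m) => [->|]; first by left.
  by case: (eqVneq w m) => [->|] _ _; [right | rewrite subrr eqxx].
have Ld : low_deg f = mdeg u.
  apply/eqP; rewrite eqn_leq low_deg_le //=.
  apply: low_deg_ge; first exact: ltnW (msize_mdeg_lt uin).
  by move=> m /supp [->|->] //; exact: ltnW.
exists [:: (1, 'X_[u])]; split; last by rewrite big_seq1 mul1r.
move=> x; rewrite inE => /eqP -> /=; exists f; split.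
  by move=> f0; move: fu; rewrite f0 mcoeff0 => /eqP; rewrite eq_sym oner_eq0.
split.
  by rewrite /in_IH /f raddfB /= !Hdeg_mmap eH subrr.
apply/mpolyP => m; rewrite init_coef Ld fc mcoeffX.
case: (eqVneq u m) => [<-|ne]; first by rewrite eqxx eq_sym (negbTE nuw) subr0.
case: (eqVneq w m) => [em|]; last by rewrite subrr; case: ifP.
by rewrite -em; case: eqP => // e; move: ltd; rewrite e ltnn.
Qed.
End Core.

Section Comb.
Variables (n : nat) (a : nat -> nat).
Local Open Scope nat_scope.
Implicit Types (m k u w : 'X_{1..n}).

Lemma HdegD m1 m2 : Hdeg a (m1 + m2)%MM = Hdeg a m1 + Hdeg a m2.
Proof. by rewrite /Hdeg -big_split; apply: eq_bigr => i _; rewrite mnmDE mulnDl. Qed.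

Lemma Hdeg_split m (o : 'I_n) :
  Hdeg a m = m o * a o + \sum_(l < n | l != o) m l * a l.
Proof. by rewrite /Hdeg (bigD1 o). Qed.

Lemma mdeg_split m (o : 'I_n) :
  mdeg m = m o + \sum_(l < n | l != o) m l.
Proof. by rewrite mdegE (bigD1 o). Qed.

Lemma HdegU (o : 'I_n) : Hdeg a U_(o)%MM = a o.
Proof.
rewrite (Hdeg_split _ o) mnm1E eqxx mul1n big1 ?addn0 // => l.
by rewrite mnm1E eq_sym => /negbTE ->.
Qed.

Lemma HdegMn m c : Hdeg a (m *+ c)%MM = Hdeg a m * c.
Proof.
rewrite /Hdeg big_distrl; apply: eq_bigr => i _ /=.
by rewrite mulmnE mulnAC.
Qed.

Lemma insg_of m (o : 'I_n) :
  in_sg n a (predC1 (o : nat)) (\sum_(l < n | l != o) m l * a l).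
Proof.
exists (fun x => \sum_(l : 'I_n | (l : nat) == x) m l).
apply: eq_big => [l|l _] /=; first by rewrite val_eqE.
rewrite (@big_pred1 _ _ _ _ l) // => l'; exact: val_eqE.
Qed.

Lemma a_pos : min_gen_increasing n a -> forall j, j < n -> 0 < a j.
Proof.
move=> [_ hmin] j hj; rewrite lt0n; apply/negP => /eqP e.
apply: (hmin j hj); exists (fun _ => 0); rewrite e big1 //.
Qed.

Lemma rest_zero m (o : 'I_n) : (forall l : 'I_n, 0 < a l) ->
  \sum_(l < n | l != o) m l * a l = 0 -> forall l, l != o -> m l = 0.
Proof.
move=> pos /eqP; rewrite sum_nat_eq0 => /forallP H l lo.
have := H l; rewrite lo /= muln_eq0 => /orP[/eqP //|/eqP e].
by have := pos l; rewrite e.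
Qed.

End Comb.

Section PartB.
Variables (K : fieldType) (n : nat) (a : nat -> nat).
Local Open Scope nat_scope.

Lemma partb (hn : 1 < n) (hq : quadratic K n a) (hmg : min_gen_increasing n a)
  i (hi : 1 <= i < n) : in_sg n a (predC1 i) (2 * a i).
Proof.
apply: NNPP => nsg.
have pos := a_pos hmg.
have posl : forall l : 'I_n, 0 < a l by move=> l; apply: pos.
have [hinc hmin] := hmg.
have hin : i < n by case/andP: hi.
have h0 : 0 < n by lia.
pose oi : 'I_n := Ordinal hin.
pose o0 : 'I_n := Ordinal h0.
have a0i : a 0 < a i by apply: hinc; lia.
pose u : 'X_{1..n} := (U_(oi) *+ a 0)%MM.
pose C : pred 'X_{1..n} := fun v => v == u.
apply: (@core K n a C (a 0) u hq).
- by move=> v /eqP ->; rewrite /u mdegMn mdeg1 mul1n.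
- move=> k j j' Pk /eqP kj eH hle.
  have jz : forall l, l != oi -> j l = 0.
    move=> l lo; have := congr1 (fun m : 'X_{1..n} => m l) kj.
    by rewrite /= mnmDE mulmnE mnm1E eq_sym (negbTE lo) mul0n; lia.
  have jc : k oi + j oi = a 0.
    by have := congr1 (fun m : 'X_{1..n} => m oi) kj; rewrite /= mnmDE mulmnE mnm1E eqxx mul1n.
  have dk : mdeg j >= j oi by rewrite (mdeg_split j oi) leq_addr.
  have dkj : mdeg k + mdeg j = a 0.
    by have := congr1 mdeg kj; rewrite mdegD /u mdegMn mdeg1 mul1n.
  have c2 : j oi <= 2 by move: Pk => /= Pk; lia.
  have Hj : Hdeg a j = j oi * a i.
    rewrite (Hdeg_split _ _ oi) big1 ?addn0 // => l lo; by rewrite jz.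
  have Hj' := Hdeg_split a j' oi; rewrite eH Hj in Hj'.
  set r := \sum_(l < n | l != oi) j' l * a l in Hj'.
  change (a (nat_of_ord oi)) with (a i) in Hj'.
  have insr : in_sg n a (predC1 i) r by exact: (insg_of a j' oi).
  have ai0 : 0 < a i by apply: pos.
  have [r0 e0] : r = 0 /\ j' oi = j oi.
    case: (ltnP (j' oi) (j oi)) => hlt.
      exfalso; have : j oi = j' oi + 1 \/ j oi = j' oi + 2 by lia.
      case=> e; rewrite e mulnDl in Hj'.
        by apply: (hmin i hin); have -> : a i = r by lia.
      by apply: nsg; have -> : 2 * a i = r by lia.
    have [t et] : exists t, j' oi = j oi + t by exists (j' oi - j oi); lia.
    rewrite et mulnDl in Hj'.
    have [t0 rr] : t * a i = 0 /\ r = 0 by lia.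
    have t00 : t = 0 by move/eqP: t0; rewrite muln_eq0 => /orP[/eqP|/eqP]; lia.
    by split; lia.
  have ej : j' = j.
    apply/mnmP => l; case: (eqVneq l oi) => [->//|lo].
    by rewrite jz // (rest_zero posl r0).
  by rewrite ej kj; split; last exact: eqxx.
- exact: eqxx.
- apply: (@binom_IHstar K n a u (U_(o0) *+ a i)%MM).
    by rewrite /u !HdegMn !HdegU /= mulnC.
  by rewrite /u !mdegMn !mdeg1 !mul1n.
Qed.

End PartB.

Lemma cmin (P : nat -> Prop) : (exists x, P x) -> exists x, P x /\ forall y, P y -> (x <= y)%N.
Proof.
move=> [x Px]; elim/ltn_ind: x Px => x IH Px.
case: (classic (exists y, (y < x)%N /\ P y)) => [[y [ly Py]]|nx].
  exact: IH y ly Py.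
exists x; split=> // y Py; rewrite leqNgt; apply/negP => ly; apply: nx; by exists y.
Qed.

Lemma cmax (P : nat -> Prop) B : (exists x, P x) -> (forall x, P x -> x <= B)%N ->
  exists x, P x /\ forall y, P y -> (y <= x)%N.
Proof.
move=> [x Px] hB.
have [e [[d0 [Pd0 ->]] me]] := @cmin (fun e => exists d, P d /\ e = B - d)%N
  (ex_intro _ (B - x)%N (ex_intro _ x (conj Px erefl))).
exists d0; split=> // y Py; have := me (B - y)%N (ex_intro _ y (conj Py erefl)).
have := hB _ Py; have := hB _ Pd0; lia.
Qed.

Section PartA.
Variables (K : fieldType) (n : nat) (a : nat -> nat).
Local Open Scope nat_scope.

Lemma mdeg_le_Hdeg (m : 'X_{1..n}) : (forall l : 'I_n, 0 < a l) -> mdeg m <= Hdeg a m.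
Proof.
move=> pos; rewrite mdegE /Hdeg; apply: leq_sum => l _; exact: leq_pmulr.
Qed.

Lemma parta (hn : 1 < n) (hq : quadratic K n a) (hmg : min_gen_increasing n a) :
  exists k l : nat, [/\ (1 <= k < n)%N, (1 <= l < n)%N & (a 0 %| a k + a l)%N].
Proof.
apply: NNPP => na.
have pos := a_pos hmg.
have posl : forall l : 'I_n, 0 < a l by move=> l; apply: pos.
have [hinc hmin] := hmg.
have h0 : 0 < n by lia.
pose o0 : 'I_n := Ordinal h0.
pose i1 : 'I_n := Ordinal hn.
have a00 : 0 < a 0 by apply: pos.
have ao0 : a o0 = a 0 by [].
have big_a : forall l : 'I_n, l != o0 -> a 0 < a l.
  move=> l lo; apply: hinc; rewrite ltn_ord andbT lt0n.
  by apply: contra lo => e; apply/eqP; apply: val_inj; apply/eqP.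
pose Wp h := exists v : 'X_{1..n}, v o0 = 0 /\ 0 < mdeg v /\ Hdeg a v = h /\ a 0 %| h.
have [hu [[v0 [v00 [v0d [v0H hudiv]]]] hmin_u]] : exists hu, Wp hu /\ forall y, Wp y -> hu <= y.
  apply: cmin; exists (a 1 * a 0), (U_(i1) *+ a 0)%MM.
  rewrite mulmnE mnm1E mdegMn mdeg1 mul1n HdegMn HdegU dvdn_mull //.
pose Dp d := exists v : 'X_{1..n}, v o0 = 0 /\ 0 < mdeg v /\ Hdeg a v = hu /\ mdeg v = d.
have [d [[u [u0 [ud [uH ud']]]] dmax]] : exists d, Dp d /\ forall y, Dp y -> y <= d.
  apply: (@cmax _ hu); first by exists (mdeg v0), v0.
  by move=> x [v [_ [_ [<- <-]]]]; exact: mdeg_le_Hdeg.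
have sub_o0 : forall m : 'X_{1..n}, m o0 = 0 -> a 0 * mdeg m + mdeg m <= Hdeg a m.
  move=> m m0; rewrite mdegE /Hdeg big_distrr -big_split /=.
  apply: leq_sum => l _; case: (eqVneq l o0) => [->|lo]; first by rewrite m0 muln0 mul0n.
  have := big_a l lo; rewrite mulnC; nia.
case: (ltnP 2 d) => hd.
  pose C : pred 'X_{1..n} := fun v => [&& v o0 == 0, Hdeg a v == hu & mdeg v == d].
  apply: (@core K n a C d u hq).
  - by move=> v /and3P[_ _ /eqP].
  - move=> k j j' /= Pk /and3P[/eqP kj0 /eqP kjH /eqP kjd] eH hle.
    have k0 : k o0 = 0 by move: kj0; rewrite mnmDE; lia.
    have dk : 1 <= mdeg k by move: kjd; rewrite mdegD; lia.
    case: (eqVneq (j' o0) 0) => [j0|j0].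
      have w0 : (k + j')%MM o0 = 0 by rewrite mnmDE k0 j0.
      have wH : Hdeg a (k + j')%MM = hu by rewrite HdegD eH -HdegD.
      have : mdeg (k + j')%MM <= d.
        apply: dmax; exists (k + j')%MM; split=> //; split=> //.
        by rewrite mdegD; lia.
      move: kjd; rewrite !mdegD => kjd le.
      have ed : mdeg j' = mdeg j by lia.
      split=> //; rewrite /C w0 wH !eqxx /= mdegD ed.
      by apply/eqP; lia.
    exfalso.
    set c := j' o0.
    have le_c : (U_(o0) *+ c <= j')%MM.
      by apply/mnm_lepP => l; rewrite mulmnE mnm1E; case: (eqVneq o0 l) => [<-|] /=; lia.
    pose w := (k + (j' - U_(o0) *+ c))%MM.
    have w0 : w o0 = 0 by rewrite mnmDE mnmBE mulmnE mnm1E eqxx k0; lia.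
    have wH : Hdeg a w + c * a 0 = hu.
      have e1 : Hdeg a j' = Hdeg a (j' - U_(o0) *+ c)%MM + c * a 0.
        by rewrite -{1}(submK le_c) HdegD HdegMn HdegU mulnC.
      move: kjH; rewrite /w !HdegD; lia.
    have wd : 0 < mdeg w by rewrite /w mdegD; lia.
    have : hu <= Hdeg a w.
      apply: hmin_u; exists w; do !split => //.
      have -> : Hdeg a w = hu - c * a 0 by lia.
      by rewrite dvdn_sub // dvdn_mull.
    have : 0 < c * a 0 by rewrite muln_gt0 lt0n j0.
    lia.
  - by rewrite /C u0 uH ud' !eqxx.
  - have hq' : hu = (hu %/ a 0) * a 0 by rewrite divnK.
    apply: (@binom_IHstar K n a u (U_(o0) *+ (hu %/ a 0))%MM).
      by rewrite uH HdegMn HdegU mulnC -hq'.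
    rewrite mdegMn mdeg1 mul1n.
    have := sub_o0 u u0; rewrite uH ud' => hh.
    rewrite ltn_divRL //; nia.
have nat0 : forall l : 'I_n, l != o0 -> 0 < l.
  move=> l lo; rewrite lt0n; apply: contra lo => /eqP e; apply/eqP.
  by apply: val_inj.
have [l ul] : exists l : 'I_n, u l != 0.
  apply: NNPP => H; move: ud; rewrite mdegE big1 // => l _.
  by case: (eqVneq (u l) 0) => // hl; exfalso; apply: H; exists l.
have lo : l != o0 by apply: contraNneq ul => ->; rewrite u0.
have le1 : (U_(l) <= u)%MM by rewrite lep1mP.
set u' := (u - U_(l))%MM.
have eu : u = (u' + U_(l))%MM by rewrite submK.
have du' : mdeg u' = d - 1 by move: ud'; rewrite eu mdegD mdeg1; lia.
case: (eqVneq d 1) => [d1|d1].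
  have u'0 : u' = 0%MM by apply/eqP; rewrite -mdeg_eq0 du' d1.
  have Hl : a l = hu by rewrite -uH eu u'0 add0m HdegU.
  apply: (hmin l (ltn_ord l)).
  exists (fun x => if x == 0 then hu %/ a 0 else 0).
  rewrite (bigD1 o0) /=; last by rewrite eq_sym -lt0n nat0.
  rewrite big1 ?addn0; first by rewrite divnK // -Hl.
  move=> j /andP[_ jo]; have := nat0 j jo; rewrite lt0n => /negbTE ->.
  by rewrite mul0n.
have [l2 /eqP el2] : exists l2 : 'I_n, u' == U_(l2)%MM.
  by apply/mdeg1P; rewrite du'; apply/eqP; lia.
have l2o : l2 != o0.
  apply: contraT => /negPn /eqP e; move: u0; rewrite eu el2 e mnmDE mnm1E eqxx.
  by lia.
apply: na; exists (nat_of_ord l2), (nat_of_ord l); split.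
- by rewrite nat0 // ltn_ord.
- by rewrite nat0 // ltn_ord.
by rewrite -(HdegU a l2) -(HdegU a l) -HdegD -el2 -eu uH.
Qed.

End PartA.

Theorem lemma1p6 (K : fieldType) (n : nat) (a : nat -> nat) :
  (1 < n)%N ->
  numerical_semigroup n a ->
  min_gen_increasing n a ->
  quadratic K n a ->
  (exists k l : nat, [/\ (1 <= k < n)%N, (1 <= l < n)%N & (a 0 %| a k + a l)%N]) /\
  (forall i : nat, (1 <= i < n)%N -> in_sg n a (predC1 i) (2 * a i)%N).
Proof.
move=> hn _ hmg hq; split; first exact: parta hn hq hmg.
by move=> i hi; exact: (@partb K n a hn hq hmg i hi).
Qed.
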